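(* If $S$ is an idempotent semiring satisfying $x\approx xyx+x+xyx$, then $S$ satisfies $xyzx\approx xzyx+xyzx+xzyx$.
   Context: An idempotent semiring is an algebra $(S,+,\cdot)$ with two binary operations such that $(S,+)$ and $(S,\cdot)$ are bands (associative, with $x+x=x$ and $xx=x$), and both distributive laws $x(y+z)=xy+xz$ and $(x+y)z=xz+yz$ hold; addition is not assumed commutative. *)

(* Defs.v *)
(* An idempotent semiring: (S,+) and (S,.) are bands (associative and
   idempotent), and both distributive laws hold.  Addition is NOT assumed
   commutative. *)
Record idempotent_semiring (S : Type) (add mul : S -> S -> S) : Prop := {
  add_assoc : forall x y z, add x (add y z) = add (add x y) z;
  add_idem  : forall x, add x x = x;
  mul_assoc : forall x y z, mul x (mul y z) = mul (mul x y) z;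
  mul_idem  : forall x, mul x x = x;
  mul_add_l : forall x y z, mul x (add y z) = add (mul x y) (mul x z);
  mul_add_r : forall x y z, mul (add x y) z = add (mul x z) (mul y z)
}.

(* Main.v *)
Require Import Defs.
From Stdlib Require Import List.
Import ListNotations.

Section W.
Variables (S : Type) (add mul : S -> S -> S).

Fixpoint ev (x : S) (l : list S) : S :=
  match l with nil => x | y :: l' => mul x (ev y l') end.

Definition evw (d : S) (l : list S) : S :=
  match l with nil => d | x :: l' => ev x l' end.

Lemma ev_app (HS : idempotent_semiring S add mul) :
  forall l1 x y l2, ev x (l1 ++ y :: l2) = mul (ev x l1) (ev y l2).
Proof.
  induction l1 as [|z l1 IH]; intros x y l2; simpl; [reflexivity|].
  rewrite IH. apply (mul_assoc _ _ _ HS).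
Qed.

Lemma key (HS : idempotent_semiring S add mul) :
  forall u0 ul t, ev u0 (ul ++ u0 :: ul ++ t) = ev u0 (ul ++ t).
Proof.
  intros u0 ul t. rewrite (ev_app HS).
  destruct t as [|s0 sl].
  - rewrite app_nil_r. apply (mul_idem _ _ _ HS).
  - rewrite (ev_app HS). rewrite (mul_assoc _ _ _ HS), (mul_idem _ _ _ HS).
    reflexivity.
Qed.

Lemma sq (HS : idempotent_semiring S add mul) :
  forall d p u0 ul s,
    evw d (p ++ (u0 :: ul) ++ (u0 :: ul) ++ s) = evw d (p ++ (u0 :: ul) ++ s).
Proof.
  intros d p u0 ul s. destruct p as [|p0 pl]; simpl.
  - apply key; assumption.
  - rewrite (ev_app HS pl p0 u0 (ul ++ u0 :: ul ++ s)), (ev_app HS pl p0 u0 (ul ++ s)).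
    f_equal. apply key; assumption.
Qed.

Lemma alg (HS : idempotent_semiring S add mul) (a b : S) :
  a = add (add (mul b a) a) (mul b a) ->
  a = add (add (mul a b) a) (mul a b) ->
  mul (mul b a) b = b ->
  a = add (add b a) b.
Proof.
  intros F1 F2 F3.
  pose proof (add_assoc _ _ _ HS) as Aa.
  assert (G : mul b a = add (add b (mul b a)) b).
  { pose proof (f_equal (mul b) F2) as E.
    rewrite !(mul_add_l _ _ _ HS) in E.
    rewrite (mul_assoc _ _ _ HS b a b), F3 in E. exact E. }
  set (ba := mul b a) in *.
  assert (Ea : a = add (add (add (add (add b ba) b) a) (add b ba)) b).
  { rewrite F1 at 1. rewrite G at 1 2. rewrite !Aa. reflexivity. }
  assert (H1 : add b a = a).
  { assert (E : a = add b (add (add (add ba b) a) (add (add b ba) b))).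
    { rewrite Ea at 1. rewrite !Aa. reflexivity. }
    rewrite E at 1. rewrite Aa, (add_idem _ _ _ HS). symmetry; exact E. }
  assert (H2 : add a b = a).
  { rewrite Ea at 1. rewrite <- Aa, (add_idem _ _ _ HS). symmetry; exact Ea. }
  rewrite H1. symmetry; exact H2.
Qed.
End W.

Theorem lemma4p6 (S : Type) (add mul : S -> S -> S)
  (HS : idempotent_semiring S add mul)
  (Hid : forall x y : S,
      x = add (add (mul (mul x y) x) x) (mul (mul x y) x)) :
  forall x y z : S,
    mul (mul (mul x y) z) x =
    add (add (mul (mul (mul x z) y) x) (mul (mul (mul x y) z) x))
        (mul (mul (mul x z) y) x).
Proof.
  intros x y z.
  pose proof (mul_assoc _ _ _ HS) as Ha.
  pose proof (sq S add mul HS x) as Sq.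
  apply (alg S add mul HS).
  -
    pose proof (f_equal (fun t => mul t (mul y (mul z x))) (Hid x (mul z y))) as E.
    simpl in E. rewrite !(mul_add_r _ _ _ HS) in E.
    assert (Hb : mul (mul (mul x (mul z y)) x) (mul y (mul z x))
                 = mul (mul (mul (mul x z) y) x) (mul (mul (mul x y) z) x)).
    { transitivity (evw S mul x [x;z;y;x;y;z;x]).
      { simpl. repeat rewrite Ha. reflexivity. }
      transitivity (evw S mul x [x;z;y;x;x;y;z;x]).
      { symmetry. exact (Sq [x;z;y] x [] [y;z;x]). }
      simpl. repeat rewrite Ha. reflexivity. }
    rewrite Hb in E.
    assert (Ha' : mul x (mul y (mul z x)) = mul (mul (mul x y) z) x)
      by (repeat rewrite Ha; reflexivity).
    rewrite Ha' in E. exact E.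
  -
    pose proof (f_equal (fun t => mul (mul x (mul y z)) t) (Hid x (mul z y))) as E.
    simpl in E. rewrite !(mul_add_l _ _ _ HS) in E.
    assert (Hb : mul (mul x (mul y z)) (mul (mul x (mul z y)) x)
                 = mul (mul (mul (mul x y) z) x) (mul (mul (mul x z) y) x)).
    { transitivity (evw S mul x [x;y;z;x;z;y;x]).
      { simpl. repeat rewrite Ha. reflexivity. }
      transitivity (evw S mul x [x;y;z;x;x;z;y;x]).
      { symmetry. exact (Sq [x;y;z] x [] [z;y;x]). }
      simpl. repeat rewrite Ha. reflexivity. }
    rewrite Hb in E.
    assert (Ha' : mul (mul x (mul y z)) x = mul (mul (mul x y) z) x)
      by (repeat rewrite Ha; reflexivity).
    rewrite Ha' in E. exact E.
  -
    transitivity (evw S mul x [x;z;y;x;x;y;z;x;x;z;y;x]).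
    { simpl. repeat rewrite Ha. reflexivity. }
    etransitivity; [exact (Sq [x;z;y] x [] [y;z;x;x;z;y;x])|].
    etransitivity; [exact (Sq [x;z;y;x;y;z] x [] [z;y;x])|].
    etransitivity; [symmetry; exact (Sq [] x [z] [y;x;y;z;x;z;y;x])|].
    etransitivity; [symmetry; exact (Sq [x;z;x;z;y;x;y;z;x;z] y [x] [])|].
    etransitivity; [exact (Sq [x] z [x;z;y;x;y] [x])|].
    etransitivity; [exact (Sq [] x [z] [y;x;y;x])|].
    etransitivity; [exact (Sq [x;z] y [x] [])|].
    simpl. repeat rewrite Ha. reflexivity.
Qed.
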